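(* For every formula $\varphi$, if $\vdash_{\mathbf{PTKv}^{-}}\varphi$ then $\varphi$ is valid (true at every world of every model).
   Context: Fix a countable set $\mathsf{Prop}$ of propositional variables, a countable set $\mathsf{Term}$ of atomic terms, and a finite set of agents $\mathcal{A}=\{1,\dots,n\}$. Let $\Theta_K=[0,1]\cap\mathbb{Q}$ and $\Theta_V^+=(\frac12,1]\cap\mathbb{Q}$. Formulas are generated by $\varphi::= p\mid t=s\mid\neg\varphi\mid(\varphi\to\psi)\mid K_i^\theta\varphi\mid Kv_i^\eta(t)$ with $p\in\mathsf{Prop}$, $t,s\in\mathsf{Term}$, $i\in\mathcal{A}$, $\theta\in\Theta_K$, $\eta\in\Theta_V^+$; other connectives are standard abbreviations. A model is $M=(W,D,\{P_i\}_{i\in\mathcal{A}},V,\mathsf{val})$ with $W\neq\emptyset$, $D\neq\emptyset$, $P_i(w)$ a countably additive probability measure on the powerset of $W$ for each $i,w$, $V:W\times\mathsf{Prop}\to\{0,1\}$, $\mathsf{val}:W\times\mathsf{Term}\to D$. Write $\llbracket\varphi\rrbracket^M=\{u\mid M,u\models\varphi\}$ and $\llbracket t=d\rrbracket^M=\{u\mid \mathsf{val}(u,t)=d\}$. Satisfaction: $M,w\models p$ iff $V(w,p)=1$; $M,w\models t=s$ iff $\mathsf{val}(w,t)=\mathsf{val}(w,s)$; Boolean clauses as usual; $M,w\models K_i^\theta\varphi$ iff $P_i(w)(\llbracket\varphi\rrbracket^M)\ge\theta$; $M,w\models Kv_i^\eta(t)$ iff there exists a unique $d\in D$ with $P_i(w)(\llbracket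 t=d\rrbracket^M)\ge\eta$. The system $\mathbf{PTKv}^{-}$ has rules Modus Ponens (from $\varphi$ and $\varphi\to\psi$ infer $\psi$) and $\mathrm{Nec}_K$ (from $\varphi$ infer $K_i^\theta\varphi$, for all $i\in\mathcal{A}$, $\theta\in\Theta_K$), and axiom schemata (for all agents $i$, terms $t,s,u$, formulas $\varphi,\psi$): all propositional tautologies; $t=t$; $t=s\to s=t$; $(t=s\wedge s=u)\to t=u$; $t=s\to((t=u)\leftrightarrow(s=u))$; $K_i^{\theta'}\varphi\to K_i^\theta\varphi$ for $\theta\le\theta'$ in $\Theta_K$; $K_i^\alpha(\varphi\to\psi)\to(K_i^\beta\varphi\to K_i^{\max\{0,\alpha+\beta-1\}}\psi)$ for $\alpha,\beta\in\Theta_K$; $K_i^\alpha\varphi\to\neg K_i^\beta\neg\varphi$ for $\alpha,\beta\in\Theta_K$ with $\alpha+\beta>1$; $K_i^0\varphi$; $K_i^1(t=s)\to(K_i^\theta(t=u)\leftrightarrow K_i^\theta(s=u))$ for $\theta\in\Theta_K$; $K_i^1(t=s)\to(Kv_i^\eta(t)\leftrightarrow Kv_i^\eta(s))$ for $\eta\in\Theta_V^+$. *)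

(* Defs.v *)
From Stdlib Require Import Reals QArith Qminmax Qreals.
From Stdlib Require Vectors.Fin.
Open Scope R_scope.

(* Propositional variables and atomic terms: countable sets, taken to be nat.
   Agents: {1,...,n} represented as Fin.t n. *)
Definition prop_var := nat.
Definition term := nat.
Definition agent (n : nat) := Fin.t n.

Definition thetaK := { q : Q | (0 <= q /\ q <= 1)%Q }.
Definition thetaV := { q : Q | (1 # 2 < q /\ q <= 1)%Q }.
Definition qK (a : thetaK) : Q := proj1_sig a.
Definition qV (a : thetaV) : Q := proj1_sig a.

Inductive form (n : nat) : Type :=
| FVar : prop_var -> form n
| FEq  : term -> term -> form n
| FNeg : form n -> form n
| FImp : form n -> form n -> form n
| FK   : agent n -> thetaK -> form n -> form n
| FKv  : agent n -> thetaV -> term -> form n.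

Arguments FVar {n}. Arguments FEq {n}. Arguments FNeg {n}.
Arguments FImp {n}. Arguments FK {n}. Arguments FKv {n}.

Definition FAnd {n} (a b : form n) : form n := FNeg (FImp a (FNeg b)).
Definition FIff {n} (a b : form n) : form n := FAnd (FImp a b) (FImp b a).

(* Countably additive probability measure on the powerset of W
   (subsets represented as predicates W -> Prop). *)
Definition is_prob_measure (W : Type) (mu : (W -> Prop) -> R) : Prop :=
  (forall A B : W -> Prop, (forall w, A w <-> B w) -> mu A = mu B) /\
  (forall A, 0 <= mu A) /\
  mu (fun _ => True) = 1 /\
  (forall A : nat -> W -> Prop,
      (forall i j w, i <> j -> A i w -> A j w -> False) ->
      infinite_sum (fun k => mu (A k)) (mu (fun w => exists k, A k w))).

Record model (n : nat) : Type := Model {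
  mW : Type;
  mD : Type;
  mW_inh : mW;
  mD_inh : mD;
  mP : agent n -> mW -> (mW -> Prop) -> R;
  mP_prob : forall i w, is_prob_measure mW (mP i w);
  mV : mW -> prop_var -> bool;
  mval : mW -> term -> mD
}.

Arguments mW {n}. Arguments mD {n}. Arguments mP {n}.
Arguments mV {n}. Arguments mval {n}.

Fixpoint sat {n} (M : model n) (w : mW M) (f : form n) : Prop :=
  match f with
  | FVar p => mV M w p = true
  | FEq t s => mval M w t = mval M w s
  | FNeg a => ~ sat M w a
  | FImp a b => sat M w a -> sat M w b
  | FK i th a => mP M i w (fun u => sat M u a) >= Q2R (qK th)
  | FKv i eta t =>
      exists d : mD M,
        mP M i w (fun u => mval M u t = d) >= Q2R (qV eta) /\
        forall d' : mD M, mP M i w (fun u => mval M u t = d') >= Q2R (qV eta) -> d' = d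
  end.

Definition valid {n} (f : form n) : Prop :=
  forall (M : model n) (w : mW M), sat M w f.

(* Propositional tautologies: true under every Boolean valuation of the
   non-Boolean subformulas (variables, equations, K- and Kv-formulas). *)
Fixpoint beval {n} (v : form n -> bool) (f : form n) : bool :=
  match f with
  | FNeg a => negb (beval v a)
  | FImp a b => implb (beval v a) (beval v b)
  | _ => v f
  end.

Definition tautology {n} (f : form n) : Prop :=
  forall v : form n -> bool, beval v f = true.

Inductive provable {n : nat} : form n -> Prop :=
| ax_taut : forall f, tautology f -> provable f
| ax_refl : forall t, provable (FEq t t)
| ax_sym : forall t s, provable (FImp (FEq t s) (FEq s t))
| ax_trans : forall t s u, provable (FImp (FAnd (FEq t s) (FEq s u)) (FEq t u))
| ax_subst : forall t s u, provable (FImp (FEq t s) (FIff (FEq t u) (FEq s u)))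
| ax_mono : forall i (th th' : thetaK) f,
    (qK th <= qK th')%Q -> provable (FImp (FK i th' f) (FK i th f))
| ax_K : forall i (al be ga : thetaK) f g,
    (qK ga == Qmax 0 (qK al + qK be - 1))%Q ->
    provable (FImp (FK i al (FImp f g)) (FImp (FK i be f) (FK i ga g)))
| ax_cons : forall i (al be : thetaK) f,
    (1 < qK al + qK be)%Q ->
    provable (FImp (FK i al f) (FNeg (FK i be (FNeg f))))
| ax_K0 : forall i (z : thetaK) f, (qK z == 0)%Q -> provable (FK i z f)
| ax_Keq : forall i (one th : thetaK) t s u, (qK one == 1)%Q ->
    provable (FImp (FK i one (FEq t s)) (FIff (FK i th (FEq t u)) (FK i th (FEq s u))))
| ax_Kveq : forall i (one : thetaK) (eta : thetaV) t s, (qK one == 1)%Q ->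
    provable (FImp (FK i one (FEq t s)) (FIff (FKv i eta t) (FKv i eta s)))
| rule_MP : forall f g, provable f -> provable (FImp f g) -> provable g
| rule_Nec : forall i (th : thetaK) f, provable f -> provable (FK i th f).

(* Main.v *)
Require Import Defs.
From Stdlib Require Import Reals QArith Qminmax Qreals Lra Lia Classical ClassicalEpsilon.
Open Scope R_scope.

Section Meas.
Variable W : Type.
Variable mu : (W -> Prop) -> R.
Hypothesis H : is_prob_measure W mu.

Lemma m_ext A B : (forall w, A w <-> B w) -> mu A = mu B.
Proof. destruct H as [h _]; apply h. Qed.
Lemma m_pos A : 0 <= mu A.
Proof. destruct H as [_ [h _]]; apply h. Qed.
Lemma m_one : mu (fun _ => True) = 1.
Proof. destruct H as [_ [_ [h _]]]; apply h. Qed.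

Lemma sum_const c n : sum_f_R0 (fun _ => c) n = INR (S n) * c.
Proof. induction n; simpl sum_f_R0. simpl; ring. rewrite IHn, !S_INR; ring. Qed.

Lemma m_empty : mu (fun _ => False) = 0.
Proof.
  destruct H as [_ [_ [_ h]]].
  specialize (h (fun _ _ => False)).
  assert (hs : infinite_sum (fun _ => mu (fun _ => False)) (mu (fun _ => False))).
  { assert (e : mu (fun w => exists k : nat, (fun (_:nat) (_:W) => False) k w) = mu (fun _ => False)).
    { apply m_ext; intros w; split; [intros [k []]| intros []]. }
    pattern (mu (fun _ : W => False)) at 2; rewrite <- e. apply h; tauto. }
  set (c := mu (fun _ => False)) in *.
  assert (0 <= c) by apply m_pos.
  destruct (Req_dec c 0) as [e|ne]; auto.
  destruct (hs (c/2)) as [N hN]; [lra|].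
  specialize (hN (S N) ltac:(lia)). rewrite sum_const in hN.
  unfold Rdist in hN. rewrite !S_INR in hN.
  assert (0 <= INR N) by apply pos_INR.
  rewrite Rabs_right in hN; nra.
Qed.

Lemma m_add A B : (forall w, A w -> B w -> False) ->
  mu (fun w => A w \/ B w) = mu A + mu B.
Proof.
  intros d.
  destruct H as [_ [_ [_ h]]].
  set (F := fun k : nat => match k with O => A | S O => B | _ => fun _ => False end).
  specialize (h F).
  assert (hs : infinite_sum (fun k => mu (F k)) (mu (fun w => exists k, F k w))).
  { apply h. intros [|[|i]] [|[|j]] w ne; simpl; try tauto; try lia; eauto. }
  assert (e : mu (fun w => exists k, F k w) = mu (fun w => A w \/ B w)).
  { apply m_ext; intros w; split.
    - intros [[|[|k]] hk]; simpl in hk; tauto.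
    - intros [a|b]; [exists 0%nat|exists 1%nat]; auto. }
  rewrite e in hs.
  apply (uniqueness_sum _ _ _ hs).
  intros eps ep. exists 1%nat. intros n hn.
  assert (sum_f_R0 (fun k => mu (F k)) n = mu A + mu B).
  { induction n. lia. destruct n. simpl; ring.
    simpl sum_f_R0 in *. rewrite IHn by lia. simpl. rewrite m_empty. ring. }
  rewrite H0. unfold Rdist. replace (mu A + mu B - (mu A + mu B)) with 0 by ring.
  rewrite Rabs_R0; lra.
Qed.

Lemma m_compl A : mu A + mu (fun w => ~ A w) = 1.
Proof.
  rewrite <- m_add by tauto. rewrite <- m_one. apply m_ext.
  intros w; generalize (classic (A w)); tauto.
Qed.

Lemma m_split A B : mu A = mu (fun w => A w /\ B w) + mu (fun w => A w /\ ~ B w).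
Proof.
  rewrite <- m_add by tauto. apply m_ext.
  intros w; generalize (classic (B w)); tauto.
Qed.

Lemma m_mono A B : (forall w, A w -> B w) -> mu A <= mu B.
Proof.
  intros s. rewrite (m_split B A).
  replace (mu (fun w => B w /\ A w)) with (mu A).
  generalize (m_pos (fun w => B w /\ ~ A w)); lra.
  apply m_ext; intros w; split; auto; tauto.
Qed.

Lemma m_inter A B : mu A + mu B - 1 <= mu (fun w => A w /\ B w).
Proof.
  rewrite (m_split A B).
  assert (mu (fun w => A w /\ ~ B w) <= mu (fun w => ~ B w)) by (apply m_mono; tauto).
  generalize (m_compl B); lra.
Qed.

Lemma m_ae E A B : mu E = 1 -> (forall w, E w -> (A w <-> B w)) -> mu A = mu B.
Proof.
  intros hE hAB.
  assert (z : forall C, mu (fun w => C w /\ ~ E w) = 0).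
  { intros C. assert (mu (fun w => C w /\ ~ E w) <= mu (fun w => ~ E w)) by (apply m_mono; tauto).
    generalize (m_compl E) (m_pos (fun w => C w /\ ~ E w)); lra. }
  rewrite (m_split A E), (m_split B E), !z.
  f_equal. apply m_ext. intros w; split; intros [a e]; split; auto; apply (hAB w e); auto.
Qed.
End Meas.

Section Main.
Variable n : nat.

Definition bv (M : model n) (w : mW M) (f : form n) : bool :=
  if excluded_middle_informative (sat M w f) then true else false.

Lemma beval_sat (M : model n) w f : beval (bv M w) f = true <-> sat M w f.
Proof.
  induction f; simpl; try (unfold bv; destruct excluded_middle_informative; split; congruence || tauto).
  - split.
    + intros h s. apply IHf in s. rewrite s in h. discriminate.
    + intros ns. destruct (beval (bv M w) f); [exfalso; apply ns, IHf; reflexivity | reflexivity].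
  - split.
    + intros h s. apply IHf1 in s. rewrite s in h. simpl in h. apply IHf2, h.
    + intros hi. destruct (beval (bv M w) f1) eqn:E1; simpl; [|reflexivity].
      apply IHf2, hi, IHf1; reflexivity.
Qed.

Lemma sat_and (M : model n) w a b : sat M w (FAnd a b) <-> sat M w a /\ sat M w b.
Proof. simpl. generalize (classic (sat M w a)) (classic (sat M w b)); tauto. Qed.

Lemma sat_iff (M : model n) w a b : sat M w (FIff a b) <-> (sat M w a <-> sat M w b).
Proof. unfold FIff. rewrite sat_and. simpl. tauto. Qed.

Lemma Q2R1 : Q2R 1 = 1.
Proof. unfold Q2R; simpl; field. Qed.
Lemma Q2R0 : Q2R 0 = 0.
Proof. unfold Q2R; simpl; field. Qed.

End Main.

Theorem theorem1 (n : nat) (f : form n) : provable f -> valid f.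
Proof.
  induction 1; intros M w.
  - apply (beval_sat n M w). apply H.
  - simpl; reflexivity.
  - simpl; auto.
  - intros h; apply sat_and in h; destruct h as [a b]; simpl in *; congruence.
  - intros e; apply sat_iff; simpl in *. rewrite e. tauto.
  - simpl. apply Qle_Rle in H. lra.
  - simpl. intros h1 h2. pose proof (mP_prob _ M i w) as P.
    eapply Rge_trans; [apply Rle_ge, (m_mono _ _ P (fun u => sat M u (FImp f g) /\ sat M u f)); simpl; tauto|].
    apply Rle_ge. rewrite (Qeq_eqR _ _ H).
    pose proof (m_inter _ _ P (fun u => sat M u (FImp f g)) (fun u => sat M u f)).
    simpl in H0.
    destruct (Qlt_le_dec (qK al + qK be - 1) 0) as [l|l].
    + rewrite (Qeq_eqR _ _ (@Q.max_l 0 _ (Qlt_le_weak _ _ l))), Q2R0. apply m_pos, P.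
    + rewrite (Qeq_eqR _ _ (@Q.max_r 0 _ l)), Q2R_minus, Q2R_plus, Q2R1. simpl. lra.
  - simpl. intros h1 h2. pose proof (mP_prob _ M i w) as P.
    apply Qlt_Rlt in H. rewrite Q2R_plus, Q2R1 in H.
    pose proof (m_compl _ _ P (fun u => sat M u f)). lra.
  - simpl. rewrite (Qeq_eqR _ _ H), Q2R0. apply Rle_ge, m_pos, (mP_prob _ M i w).
  - intros h1; apply sat_iff; simpl in *. pose proof (mP_prob _ M i w) as P.
    rewrite (Qeq_eqR _ _ H), Q2R1 in h1.
    assert (e1 : mP M i w (fun u => mval M u t = mval M u s) = 1).
    { pose proof (m_mono _ _ P (fun u => mval M u t = mval M u s) (fun _ => True) (fun _ _ => I)).
      rewrite (m_one _ _ P) in H0. lra. }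
    rewrite (m_ae _ _ P _ (fun x => mval M x t = mval M x u) (fun x => mval M x s = mval M x u) e1).
    tauto. intros x ex; rewrite ex; tauto.
  - intros h1; apply sat_iff; simpl in *. pose proof (mP_prob _ M i w) as P.
    rewrite (Qeq_eqR _ _ H), Q2R1 in h1.
    assert (e1 : mP M i w (fun u => mval M u t = mval M u s) = 1).
    { pose proof (m_mono _ _ P (fun u => mval M u t = mval M u s) (fun _ => True) (fun _ _ => I)).
      rewrite (m_one _ _ P) in H0. lra. }
    assert (ed : forall d, mP M i w (fun u => mval M u t = d) = mP M i w (fun u => mval M u s = d)).
    { intros d. apply (m_ae _ _ P _ _ _ e1). intros x ex; rewrite ex; tauto. }
    split; intros [d [hd hu]]; exists d; split.
    + rewrite <- ed; auto.
    + intros d'; rewrite <- ed; auto.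
    + rewrite ed; auto.
    + intros d'; rewrite ed; auto.
  - apply (IHprovable2 M w), IHprovable1.
  - simpl. pose proof (mP_prob _ M i w) as P.
    rewrite (m_ext _ _ P _ (fun _ => True)), (m_one _ _ P).
    + destruct th as [q [q0 q1]]; simpl. apply Qle_Rle in q1. rewrite Q2R1 in q1. lra.
    + intros u; split; auto.
Qed.
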